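(* Let $k\ge 1$ and let $S_a,S_b\in\{0,1\}^{k^2}$. Let $G$ be the directed weighted graph on the $6k+1$ vertices $\ell_i,\ell_i',r_i,r_i',\overline{\ell}_i$ ($1\le i\le k$) and $p_0,\dots,p_k$ with the following edges: for each $1\le i\le k$, the edges $(\ell_i,r_i)$ and $(r_i',\ell_i')$ of weight $k$, the edge $(p_{i-1},p_i)$ of weight $1$, the edge $(p_{i-1},\ell_i)$ of weight $4k(k-i+1)$, and the edge $(\overline{\ell}_i,p_i)$ of weight $4ki$; for each $1\le i,j\le k$, the edge $(\ell_j',\overline{\ell}_i)$ of weight $k$ if $S_a[(i-1)k+j]=1$, and the edge $(r_i,r_j')$ of weight $k$ if $S_b[(i-1)k+j]=1$. Then $\Pi=\langle p_0,p_1,\dots,p_k\rangle$ is a shortest $p_0$-$p_k$ path in $G$, and: (i) if there is an index $m$ with $S_a[m]=S_b[m]=1$, the weight of a second simple shortest path from $p_0$ to $p_k$ (with respect to $\Pi$) is at most $4k^2+9k-1$; (ii) if there is no such index, every simple $p_0$-$p_k$ path that avoids at least one edge of $\Pi$ has weight at least $4k^2+12k$.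
   Context: Given a graph, vertices $s,t$ and a shortest $s$-$t$ path $P_{st}$, a second simple shortest path is a minimum-weight simple $s$-$t$ path that does not contain at least one edge of $P_{st}$. For a bit string $S$, $S[m]$ denotes its $m$-th bit. *)

(* Defs.v *)
From HB Require Import structures.
From mathcomp Require Import all_boot.
Set Implicit Arguments. Unset Strict Implicit. Unset Printing Implicit Defensive.

(** * Generic directed weighted graphs, given by a partial weight function:
    [w u v = Some c] iff there is an edge (u,v), of weight c. *)
Section Graphs.
Variable V : eqType.
Variable w : V -> V -> option nat.

(** A path (walk) from [x] is [x :: s]; consecutive vertices are joined by edges. *)
Definition is_walk (x : V) (s : seq V) : bool :=
  path (fun u v => w u v != None) x s.

Definition is_st_walk (s0 t0 x : V) (s : seq V) : bool :=
  [&& x == s0, last x s == t0 & is_walk x s].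

Definition is_simple_st_path (s0 t0 x : V) (s : seq V) : bool :=
  is_st_walk s0 t0 x s && uniq (x :: s).

Definition walk_weight (x : V) (s : seq V) : nat :=
  sumn (pairmap (fun u v => odflt 0 (w u v)) x s).

Definition walk_edges (x : V) (s : seq V) : seq (V * V) := zip (x :: s) s.

Definition is_shortest_path (s0 t0 x : V) (s : seq V) : Prop :=
  is_st_walk s0 t0 x s /\
  forall y q, is_st_walk s0 t0 y q -> walk_weight x s <= walk_weight y q.

Definition avoids_some_edge (px : V) (ps : seq V) (x : V) (s : seq V) : bool :=
  has (fun e => e \notin walk_edges x s) (walk_edges px ps).

Definition is_simple_replacement (s0 t0 px : V) (ps : seq V) (x : V) (s : seq V) :=
  is_simple_st_path s0 t0 x s && avoids_some_edge px ps x s.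

Definition is_second_simple_shortest_path (s0 t0 px : V) (ps : seq V)
    (x : V) (s : seq V) : Prop :=
  is_simple_replacement s0 t0 px ps x s /\
  forall y q, is_simple_replacement s0 t0 px ps y q ->
    walk_weight x s <= walk_weight y q.
End Graphs.

Inductive vtx :=
| Lv of nat
| Lv' of nat
| Rv of nat
| Rv' of nat
| Lb of nat
| Pv of nat.

Definition vtx_code (x : vtx) : nat * nat :=
  match x with
  | Lv i => (0, i) | Lv' i => (1, i) | Rv i => (2, i)
  | Rv' i => (3, i) | Lb i => (4, i) | Pv i => (5, i)
  end.
Definition vtx_decode (c : nat * nat) : vtx :=
  match c with
  | (0, i) => Lv i | (1, i) => Lv' i | (2, i) => Rv i
  | (3, i) => Rv' i | (4, i) => Lb i | (_, i) => Pv i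
  end.
Lemma vtx_codeK : cancel vtx_code vtx_decode.
Proof. by case. Qed.
HB.instance Definition _ := Equality.copy vtx (can_type vtx_codeK).

(** bit m (1-indexed) of a bit string of length n: S[m] *)
Definition bit (n : nat) (S : n.-tuple bool) (m : nat) : bool := nth false S m.-1.

Definition inr1 (k i : nat) : bool := (1 <= i <= k).

Definition Gw (k : nat) (Sa Sb : (k ^ 2).-tuple bool) (u v : vtx) : option nat :=
  match u, v with
  | Lv i, Rv j => if (i == j) && inr1 k i then Some k else None
  | Rv' i, Lv' j => if (i == j) && inr1 k i then Some k else None
  | Pv a, Pv b => if (b == a.+1) && inr1 k b then Some 1 else None
  | Pv a, Lv i => if (i == a.+1) && inr1 k i then Some (4 * k * (k - i + 1)) else None
  | Lb i, Pv j => if (i == j) && inr1 k i then Some (4 * k * i) else None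
  | Lv' j, Lb i =>
      if [&& inr1 k i, inr1 k j & bit Sa ((i - 1) * k + j)] then Some k else None
  | Rv i, Rv' j =>
      if [&& inr1 k i, inr1 k j & bit Sb ((i - 1) * k + j)] then Some k else None
  | _, _ => None
  end.

(** Pi = <p_0, p_1, ..., p_k>, written as head p_0 and tail [p_1; ...; p_k] *)
Definition Pi_tail (k : nat) : seq vtx := [seq Pv i | i <- iota 1 k].

(* Main.v *)
Require Import Defs.
From mathcomp Require Import all_boot zify.
From Stdlib Require Import Classical.
Set Implicit Arguments. Unset Strict Implicit. Unset Printing Implicit Defensive.

Section S.
Variable k : nat.
Variables Sa Sb : (k ^ 2).-tuple bool.
Notation G := (Gw Sa Sb).

Lemma ww_cons x y s : walk_weight G x (y :: s) = odflt 0 (G x y) + walk_weight G y s.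
Proof. by []. Qed.

Lemma edge_P a y : G (Pv a) y != None ->
  (y = Pv a.+1 /\ a.+1 <= k) \/ (y = Lv a.+1 /\ 1 <= a.+1 <= k).
Proof.
case: y => //= i; case: ifP => // /andP [/eqP -> H] _; rewrite /inr1 in H.
- by right.
- by left; case/andP: H.
Qed.

Lemma edge_L i y : G (Lv i) y != None -> y = Rv i /\ G (Lv i) y = Some k.
Proof. case: y => //= j; case: ifP => // /andP [/eqP <- H] _; by []. Qed.

Lemma edge_R i y : G (Rv i) y != None -> exists j, y = Rv' j /\ G (Rv i) y = Some k /\
   [&& inr1 k i, inr1 k j & bit Sb ((i - 1) * k + j)].
Proof. case: y => //= j; case: ifP => // H _; by exists j. Qed.

Lemma edge_R' i y : G (Rv' i) y != None -> y = Lv' i /\ G (Rv' i) y = Some k.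
Proof. case: y => //= j; case: ifP => // /andP [/eqP <- H] _; by []. Qed.

Lemma edge_L' j y : G (Lv' j) y != None -> exists i, y = Lb i /\ G (Lv' j) y = Some k /\
   [&& inr1 k i, inr1 k j & bit Sa ((i - 1) * k + j)].
Proof. case: y => //= i; case: ifP => // H _; by exists i. Qed.

Lemma edge_Lb i y : G (Lb i) y != None -> y = Pv i /\ G (Lb i) y = Some (4 * k * i).
Proof. case: y => //= j; case: ifP => // /andP [/eqP <- H] _; by []. Qed.

Definition phi (x : vtx) := if x is Pv i then i else 0.

Lemma pot x s : is_walk G x s -> phi (last x s) <= phi x + walk_weight G x s.
Proof.
elim: s x => [|y s IH] x /=; first by rewrite addn0.
case/andP=> He Hw; rewrite ww_cons.
move: (IH _ Hw) => H1; suff H2: phi y <= phi x + odflt 0 (G x y) by apply: leq_trans H1 _; rewrite addnA leq_add2r. clear -He.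
move: He; rewrite /inr1; case: x => a; case: y => b //=; try (case: ifP => //= H _; lia). case: ifP => // /andP[/eqP <- /andP[H1 H2]] _ /=; nia.
Qed.

Definition Pseg a n := [seq Pv i | i <- iota a.+1 n].

Lemma edgePP a : a.+1 <= k -> G (Pv a) (Pv a.+1) = Some 1.
Proof. by move=> H /=; rewrite eqxx /inr1 H. Qed.

Lemma Pseg_walk a n : a + n <= k -> is_walk G (Pv a) (Pseg a n).
Proof.
elim: n a => [|n IH] a H //=.
rewrite eqxx /inr1 (_ : a.+1 <= k) /=; [apply: (IH a.+1); lia | lia].
Qed.

Lemma Pseg_last a n : last (Pv a) (Pseg a n) = Pv (a + n).
Proof. elim: n a => [|n IH] a /=; first by rewrite addn0. by rewrite IH addSnnS. Qed.

Lemma Pseg_weight a n : a + n <= k -> walk_weight G (Pv a) (Pseg a n) = n.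
Proof.
elim: n a => [|n IH] a H //=.
rewrite ww_cons edgePP; last lia. rewrite (IH a.+1) /=; lia.
Qed.

Lemma Pseg_edges a n e : e \in walk_edges (Pv a) (Pseg a n) ->
  exists t, [/\ a <= t, t < a + n & e = (Pv t, Pv t.+1)].
Proof.
elim: n a => [|n IH] a //=. rewrite inE => /orP [/eqP ->|].
  exists a; split => //; lia.
move/IH => [t [H1 H2 ->]]; exists t; split => //; lia.
Qed.

Lemma Pv_eq a b : (Pv a == Pv b) = (a == b).
Proof. by apply/eqP/eqP => [[]|->]. Qed.

Definition common := exists m, [&& 1 <= m <= k ^ 2, bit Sa m & bit Sb m].

Lemma partii a s : ~ common -> is_walk G (Pv a) s -> last (Pv a) s = Pv k ->
  uniq (Pv a :: s) -> (forall b, b < a -> Pv b \notin s) ->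
  s = Pseg a (k - a) \/ 4 * k ^ 2 + 12 * k <= walk_weight G (Pv a) s.
Proof.
move=> Hc; elim: s a => [|y s IH] a.
  by move=> _ /= [->] _ _; left; rewrite subnn.
move=> /= /andP [He Hw] Hl /andP [Hn Hu] Hb.
case: (edge_P He) => [[Hy Hk]|[Hy Hk]]; subst y.
- have Hb2 : forall b, b < a.+1 -> Pv b \notin s.
    move=> b Hb'. case: (ltngtP b a) => [Hlt|Hgt|Heq].
    * by move: (Hb b Hlt); rewrite inE negb_or => /andP [].
    * lia.
    * by subst b; move: Hn; rewrite inE negb_or => /andP [].
  case: (IH a.+1 Hw Hl Hu Hb2) => [->|H].
  + left. have -> : k - a = (k - a.+1).+1 by lia. by [].
  + by right; rewrite ww_cons; lia.
- right.
  case: s Hw Hl Hu Hn Hb IH => [|y2 s2] //= /andP [He2 Hw2] Hl Hu Hn Hb _.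
  case: (edge_L He2) => Hy2 Hw2e; subst y2.
  case: s2 Hw2 Hl Hu Hn Hb => [|y3 s3] //= /andP [He3 Hw3] Hl Hu Hn Hb.
  case: (edge_R He3) => j [Hy3 [Hw3e Hbj]]; subst y3.
  case: s3 Hw3 Hl Hu Hn Hb => [|y4 s4] //= /andP [He4 Hw4] Hl Hu Hn Hb.
  case: (edge_R' He4) => Hy4 Hw4e; subst y4.
  case: s4 Hw4 Hl Hu Hn Hb => [|y5 s5] //= /andP [He5 Hw5] Hl Hu Hn Hb.
  case: (edge_L' He5) => i [Hy5 [Hw5e Hbi]]; subst y5.
  case: s5 Hw5 Hl Hu Hn Hb => [|y6 s6] //= /andP [He6 Hw6] Hl Hu Hn Hb.
  case: (edge_Lb He6) => Hy6 Hw6e; subst y6.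
  rewrite !ww_cons Hw2e Hw3e Hw4e Hw5e Hw6e /= eqxx /inr1 Hk /=.
  clear He He2 He3 He4 He5 He6 Hu Hl Hw6 Hw2e Hw3e Hw4e Hw5e Hw6e.
  have Hia : a != i.
    by apply/eqP => E; subst i; move: Hn; rewrite !inE eqxx !orbT.
  have Hia2 : ~ i < a.
    by move=> /Hb; rewrite !inE eqxx !orbT.
  have Hia3 : i != a.+1.
    apply/eqP => Ei; subst i; apply: Hc; exists (a * k + j); clear Hb Hn.
    move: Hbj Hbi; rewrite /inr1 subSS subn0 => /and3P [_ /andP [Hj1 Hj2] ->] /and3P [_ _ ->].
    rewrite !andbT; have : a.+1 * k <= k * k by apply: leq_mul.
    rewrite mulSn (_ : k ^ 2 = k * k); last by rewrite mulnn.
    move=> ?; apply/andP; split; lia.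
  clear Hb Hn Hbj Hbi Hc.
  have Hi : a.+2 <= i by lia.
  have E1 : 4 * k * (k - a.+1 + 1) + 4 * k * i = 4 * k * ((k - a.+1 + 1) + i) by rewrite -mulnDr.
  have E2 : 4 * k * (k + 2) <= 4 * k * ((k - a.+1 + 1) + i) by apply: leq_mul => //; lia.
  have E3 : 4 * k * (k + 2) = 4 * k ^ 2 + 8 * k by rewrite mulnDr -mulnA mulnn; lia.
  lia.
Qed.


Lemma ww_cat x s1 s2 : walk_weight G x (s1 ++ s2) = walk_weight G x s1 + walk_weight G (last x s1) s2.
Proof. by rewrite /walk_weight pairmap_cat sumn_cat. Qed.

Lemma we_cat (x : vtx) (s1 s2 : seq vtx) (e : vtx * vtx) : e \in walk_edges x (s1 ++ s2) ->
  e \in walk_edges x s1 \/ e \in walk_edges (last x s1) s2.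
Proof.
elim: s1 x => [|y s1 IH] x /=; first by right.
rewrite inE => /orP [/eqP ->|/IH [H|H]]; [left; exact: mem_head| left | right => //].
by rewrite inE H orbT.
Qed.

Lemma Pseg_edge_in a n t : a <= t < a + n -> (Pv t, Pv t.+1) \in walk_edges (Pv a) (Pseg a n).
Proof.
elim: n a => [|n IH] a H; first lia.
rewrite /= inE; case: (ltngtP a t) => [Hlt|Hgt|->].
- by rewrite (IH a.+1) ?orbT //; lia.
- lia.
- by rewrite eqxx.
Qed.

Lemma vtx_eqE (u v : vtx) : (u == v) = (vtx_code u == vtx_code v).
Proof. by []. Qed.

Lemma ex_min (P : nat -> Prop) n : P n -> exists m, P m /\ forall p, P p -> m <= p.
Proof.
move=> Hn; suff: forall N n, n <= N -> P n -> exists m, P m /\ forall p, P p -> m <= p.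
  by move/(_ n n (leqnn n) Hn).
elim=> [|N IH] n0 Hn0 HP.
  exists n0; split => // p _; lia.
case: (classic (exists p, p < n0 /\ P p)) => [[p [Hp HPp]]|Hno].
  apply: (IH p) => //; lia.
exists n0; split => // p HPp; case: (leqP n0 p) => // Hlt.
by exfalso; apply: Hno; exists p.
Qed.

Definition rk (a : nat) (v : vtx) : nat :=
  match v with
  | Pv t => 6 * t | Lv t => 6 * t - 5 | Rv t => 6 * t - 4
  | Rv' _ => 6 * a + 3 | Lv' _ => 6 * a + 4 | Lb _ => 6 * a + 5
  end.

Lemma Pseg_rk a0 a n : path (relpre (rk a0) ltn) (Pv a) (Pseg a n).
Proof. elim: n a => [|n IH] a //=; rewrite IH andbT; lia. Qed.

Lemma iw_cat x s1 s2 : is_walk G x (s1 ++ s2) = is_walk G x s1 && is_walk G (last x s1) s2.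
Proof. exact: cat_path. Qed.

Definition Dg a j := [:: Lv a.+1; Rv a.+1; Rv' j; Lv' j; Lb a.+1; Pv a.+1].
Definition spath a j := Pseg a 0 ++ Dg a j ++ Pseg a.+1 (k - a.+1).

Lemma parti a j : a < k -> 1 <= j <= k -> bit Sa (a * k + j) -> bit Sb (a * k + j) ->
  is_simple_replacement G (Pv 0) (Pv k) (Pv 0) (Pi_tail k) (Pv 0) (Pseg 0 a ++ Dg a j ++ Pseg a.+1 (k - a.+1))
  /\ walk_weight G (Pv 0) (Pseg 0 a ++ Dg a j ++ Pseg a.+1 (k - a.+1)) <= 4 * k ^ 2 + 9 * k - 1.
Proof.
move=> Hak /andP [Hj1 Hj2] HA HB.
have HD : is_walk G (Pv a) (Dg a j).
  by rewrite /is_walk /= eqxx /inr1 Hak Hj1 Hj2 subSS subn0 HA HB /= eqxx.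
have Hlast1 : last (Pv 0) (Pseg 0 a) = Pv a by rewrite Pseg_last.
have Hlast2 : last (Pv a) (Dg a j) = Pv a.+1 by [].
split; last first.
  rewrite !ww_cat Hlast1 Hlast2 !Pseg_weight; try lia.
  rewrite /Dg !ww_cons /= eqxx /inr1 Hak Hj1 Hj2 subSS subn0 HA HB /= eqxx /walk_weight /=.
  have E1 : 4 * k * (k - a.+1 + 1) + 4 * k * a.+1 = 4 * k * ((k - a.+1 + 1) + a.+1) by rewrite -mulnDr.
  have E2 : (k - a.+1 + 1) + a.+1 = k + 1 by lia.
  have E3 : 4 * k * (k + 1) = 4 * k ^ 2 + 4 * k by rewrite mulnDr -mulnA mulnn; lia.
  rewrite E2 E3 in E1. lia.
apply/andP; split; first (apply/andP; split).
- rewrite /is_st_walk eqxx last_cat Hlast1 last_cat Hlast2 Pseg_last.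
  rewrite (_ : a.+1 + (k - a.+1) = k); last lia.
  rewrite eqxx !andTb iw_cat Pseg_walk; last lia.
  by rewrite Hlast1 iw_cat HD Hlast2 Pseg_walk //; lia.
- apply: (@map_uniq _ _ (rk a)); apply: (sorted_uniq ltn_trans ltnn).
  change (path ltn (rk a (Pv 0)) (map (rk a) (Pseg 0 a ++ Dg a j ++ Pseg a.+1 (k - a.+1)))); rewrite path_map cat_path Pseg_rk Hlast1 cat_path Pseg_rk /= ?andbT.
  lia.
- apply/hasP; exists (Pv a, Pv a.+1).
    by apply: (Pseg_edge_in (a := 0) (n := k)); lia.
  apply/negP => /we_cat [/Pseg_edges [t [_ Ht [E1 E2]]]|]; first lia.
  rewrite Hlast1 => /we_cat [|].
    by rewrite /= !inE !xpair_eqE !vtx_eqE /= !xpair_eqE /= ?andbF.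
  move=> H; have H' : (Pv a, Pv a.+1) \in walk_edges (Pv a.+1) (Pseg a.+1 (k - a.+1)) := H.
  case: (Pseg_edges H') => t [Ht _ [E1 E2]]; lia.
Qed.

End S.

Theorem mainTheorem1 (k : nat) (Sa Sb : (k ^ 2).-tuple bool) :
  1 <= k ->
  is_shortest_path (Gw Sa Sb) (Pv 0) (Pv k) (Pv 0) (Pi_tail k) /\
  ((exists m, [&& 1 <= m <= k ^ 2, bit Sa m & bit Sb m]) ->
     exists x s,
       is_second_simple_shortest_path (Gw Sa Sb) (Pv 0) (Pv k) (Pv 0) (Pi_tail k) x s
       /\ walk_weight (Gw Sa Sb) x s <= 4 * k ^ 2 + 9 * k - 1) /\
  (~ (exists m, [&& 1 <= m <= k ^ 2, bit Sa m & bit Sb m]) ->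
     forall x s,
       is_simple_replacement (Gw Sa Sb) (Pv 0) (Pv k) (Pv 0) (Pi_tail k) x s ->
       4 * k ^ 2 + 12 * k <= walk_weight (Gw Sa Sb) x s).
Proof.
move=> Hk.
have HPw : is_walk (Gw Sa Sb) (Pv 0) (Pi_tail k) by apply: (@Pseg_walk k Sa Sb 0 k).
have HPl : last (Pv 0) (Pi_tail k) = Pv k by rewrite (Pseg_last 0 k).
have HPww : walk_weight (Gw Sa Sb) (Pv 0) (Pi_tail k) = k by apply: (@Pseg_weight k Sa Sb 0 k).
split; [|split].
- split; first by rewrite /is_st_walk eqxx HPl eqxx HPw.
  move=> y q /and3P [/eqP -> /eqP Hl Hw]; rewrite HPww.
  by have := pot Hw; rewrite Hl.
- move=> [m /and3P [/andP [Hm1 Hm2] HA HB]].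
  set a := (m - 1) %/ k; set j := ((m - 1) %% k).+1.
  have Hm : a * k + j = m by rewrite /a /j addnS -divn_eq; lia.
  have Hak : a < k.
    rewrite /a ltn_divLR //; move: Hm2; rewrite -mulnn; lia.
  have Hj : 1 <= j <= k by rewrite /j /= ltn_pmod.
  rewrite -Hm in HA HB.
  have [Hr Hb] := parti Hak Hj HA HB.
  pose P n := exists y q, is_simple_replacement (Gw Sa Sb) (Pv 0) (Pv k) (Pv 0) (Pi_tail k) y q
     /\ walk_weight (Gw Sa Sb) y q = n.
  have [|n0 [[y [q [Hr0 Hw0]]] Hmin]] := ex_min (P := P) (n := walk_weight (Gw Sa Sb) (Pv 0)
      (Pseg 0 a ++ Dg a j ++ Pseg a.+1 (k - a.+1))).
    by exists (Pv 0), (Pseg 0 a ++ Dg a j ++ Pseg a.+1 (k - a.+1)).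
  exists y, q; split; first split => //.
    by move=> y' q' Hr'; rewrite Hw0; apply: Hmin; exists y', q'.
  rewrite Hw0; apply: leq_trans Hb; apply: Hmin.
  by exists (Pv 0), (Pseg 0 a ++ Dg a j ++ Pseg a.+1 (k - a.+1)).
- move=> Hc x s /andP [/andP [/and3P [/eqP -> /eqP Hl Hw] Hu] Hav].
  case: (partii Hc Hw Hl Hu) => // Hs.
  move: Hav; rewrite Hs subn0 /avoids_some_edge => /hasP [e He Hn]; move/negP: Hn => Hn; exfalso; apply: Hn; exact He.
Qed.
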